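(* Let $p$ be a prime and $\alpha$ a positive integer. For $l\in\mathbb{N}$, $n\in\mathbb{N}$, $r\in\mathbb{Z}$ let $$T_l(n,r)=\frac{l!\,p^l}{\lfloor n/p^{\alpha-1}\rfloor!}\sum_{k\equiv r\ (\mathrm{mod}\ p^{\alpha})}\binom nk(-1)^k\binom{(k-r)/p^{\alpha}}l.$$ Let $l\in\mathbb{N}$, $n\in\mathbb{Z}^+$ and $r\in\mathbb{Z}$. Then $$T_l(n-1,r)-T_l(n-1,r-1)=\begin{cases}T_l(n,r)&\text{if } p^{\alpha-1}\nmid n,\\ \frac n{p^{\alpha-1}}T_l(n,r)&\text{otherwise}.\end{cases}$$ If $l>0$, then also $$T_l(n,r)+\frac r{p^{\alpha-1}}T_{l-1}(n,r+p^{\alpha})=\begin{cases}-T_{l-1}(n-1,r+p^{\alpha}-1)&\text{if } p^{\alpha-1}\mid n,\\ -\frac n{p^{\alpha-1}}T_{l-1}(n-1,r+p^{\alpha}-1)&\text{otherwise}.\end{cases}$$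
   Context: The sum runs over all integers $k\equiv r\pmod{p^\alpha}$ with $\binom nk=0$ unless $0\le k\le n$; $\binom xl=x(x-1)\cdots(x-l+1)/l!$. *)

(* Defs.v *)
From mathcomp Require Import all_boot all_order all_algebra.
Set Implicit Arguments. Unset Strict Implicit. Unset Printing Implicit Defensive.
Import Order.TTheory GRing.Theory Num.Theory.
Local Open Scope ring_scope.

Definition binz (x : int) (l : nat) : rat :=
  (\prod_(i < l) (x%:~R - (i%:R : rat))) / (l`!)%:R.

(* T_l(n,r) for prime p and exponent alpha; the sum over k = r (mod p^alpha)
   is restricted to 0 <= k <= n since binom n k = 0 otherwise. *)
Definition T (p alpha : nat) (l n : nat) (r : int) : rat :=
  ((l`! * p ^ l)%:R / ((n %/ p ^ alpha.-1)`!)%:R) *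
  \sum_(0 <= k < n.+1 | ((k%:Z - r) %% (p ^ alpha)%:Z)%Z == 0%Z)
     ('C(n, k)%:R * (-1) ^+ k * binz ((k%:Z - r) %/ (p ^ alpha)%:Z)%Z l).

(* Main.v *)
Require Import Defs.
From mathcomp Require Import all_boot all_order all_algebra.
From mathcomp Require Import ring lra zify.
Import Order.TTheory GRing.Theory Num.Theory.
Local Open Scope ring_scope.

Definition Fterm (m : nat) (l n : nat) (r : int) (k : nat) : rat :=
  if ((k%:Z - r) %% m%:Z)%Z == 0%Z then
    'C(n, k)%:R * (-1) ^+ k * binz ((k%:Z - r) %/ m%:Z)%Z l else 0.

Definition S (m l n : nat) (r : int) : rat := \sum_(0 <= k < n.+1) Fterm m l n r k.

Lemma S_widen m l n r N : (n.+1 <= N)%N -> S m l n r = \sum_(0 <= k < N) Fterm m l n r k.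
Proof.
move=> hN; rewrite /S [RHS](big_cat_nat _ (n:=n.+1)) //= [X in _ = _ + X]big1_seq ?addr0 //.
move=> k /andP[_]; rewrite mem_index_iota => /andP[hk _].
by rewrite /Fterm bin_small //; case: ifP => _ //; rewrite !mul0r.
Qed.

Lemma Fterm_pascal m l n r j :
  Fterm m l n.+1 r j.+1 = Fterm m l n r j.+1 - Fterm m l n (r - 1) j.
Proof.
have E : (j.+1%:Z - r = j%:Z - (r - 1))%R by lia.
rewrite /Fterm E; case: ifP => _; last by rewrite subr0.
rewrite binS natrD exprS; ring.
Qed.

Lemma S_pascal m l n r : S m l n.+1 r = S m l n r - S m l n (r - 1).
Proof.
rewrite (S_widen m l n r n.+2) // /S [LHS]big_nat_recl // [X in _ = X - _]big_nat_recl //.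
rewrite -addrA -sumrB; congr (_ + _).
  by rewrite /Fterm !bin0.
by apply: eq_bigr => j _; rewrite Fterm_pascal.
Qed.

Lemma binzS x l : (l.+1)%:R * binz x l.+1 = x%:~R * binz (x - 1) l.
Proof.
rewrite /binz big_ord_recl factS natrM /=.
have -> : \prod_(i < l) (x%:~R - (bump 0 i)%:R : rat) =
          \prod_(i < l) ((x - 1)%:~R - (i%:R : rat)).
  apply: eq_bigr => i _; rewrite /bump /= add1n -natr1 intrD; ring.
have h1 : (l`!)%:R != 0 :> rat by rewrite pnatr_eq0 -lt0n fact_gt0.
have h2 : (l.+1)%:R != 0 :> rat by rewrite pnatr_eq0.
field; by rewrite h1 /= addrC natr1 h2.
Qed.

Lemma Fterm_key1 p q l n r k : (0 < p)%N -> (0 < q)%N ->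
  (l.+1 * p)%:R * Fterm (p * q) l.+1 n r k
  + (r%:~R / q%:R) * Fterm (p * q) l n (r + (p * q)%:Z) k
  = (k%:R / q%:R) * Fterm (p * q) l n (r + (p * q)%:Z) k.
Proof.
move=> hp hq; set m := (p * q)%N.
have m0 : m%:Z != 0 by rewrite /m; lia.
have E : (k%:Z - (r + m%:Z) = (-1) * m%:Z + (k%:Z - r))%R by ring.
rewrite /Fterm E modzMDl divzMDl //.
case: ifP => hc; last by rewrite !mulr0 addr0.
set x := ((k%:Z - r) %/ m%:Z)%Z.
have hx : (x * m%:Z = k%:Z - r)%R by rewrite divzK //; apply/dvdz_mod0P/eqP.
have hxr : (x%:~R * m%:R : rat) = k%:R - r%:~R.
  by rewrite -[m%:R]/(m%:Z%:~R) -intrM hx intrB.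
have hk : (k%:R : rat) = x%:~R * m%:R + r%:~R by rewrite hxr; ring.
rewrite hk.
have -> : ((-1) + x = x - 1)%R by ring.
have h2 : (l.+1)%:R != 0 :> rat by rewrite pnatr_eq0.
have hb : binz x l.+1 = x%:~R * binz (x - 1) l / (l.+1)%:R.
  by rewrite -binzS mulrAC divff // mul1r.
rewrite hb.
have hq0 : q%:R != 0 :> rat by rewrite pnatr_eq0 -lt0n.
rewrite /m natrM natrM.
field; by rewrite hq0 /= addrC natr1 h2.
Qed.

Lemma Fterm_key2 m q l n r j :
  (j.+1%:R / q%:R) * Fterm m l n.+1 (r + m%:Z) j.+1
  = - (n.+1%:R / q%:R) * Fterm m l n (r + m%:Z - 1) j.
Proof.
have E : (j.+1%:Z - (r + m%:Z) = j%:Z - (r + m%:Z - 1))%R by lia.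
rewrite /Fterm E; case: ifP => _; last by rewrite !mulr0.
have hb := congr1 (fun t => t%:R : rat) (mul_bin_diag n.+1 j).
rewrite /= !natrM in hb.
rewrite exprS.
have -> : (j.+1%:R / q%:R) * ('C(n.+1, j.+1)%:R * (-1 * (-1) ^+ j) *
   binz ((j%:Z - (r + m%:Z - 1)) %/ m%:Z)%Z l) =
   - ((j.+1%:R * 'C(n.+1, j.+1)%:R) / q%:R) * ((-1) ^+ j *
   binz ((j%:Z - (r + m%:Z - 1)) %/ m%:Z)%Z l) by ring.
rewrite -hb; ring.
Qed.

Lemma S_key p q l n r : (0 < p)%N -> (0 < q)%N ->
  (l.+1 * p)%:R * S (p * q) l.+1 n.+1 r
  + (r%:~R / q%:R) * S (p * q) l n.+1 (r + (p * q)%:Z)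
  = - (n.+1%:R / q%:R) * S (p * q) l n (r + (p * q)%:Z - 1).
Proof.
move=> hp hq; rewrite /S !mulr_sumr -big_split /=.
rewrite (eq_bigr (fun k => (k%:R / q%:R) * Fterm (p * q) l n.+1 (r + (p * q)%:Z) k));
  last by move=> k _; rewrite Fterm_key1.
rewrite big_nat_recl // mul0r mul0r add0r; apply: eq_bigr => j _.
by rewrite Fterm_key2.
Qed.

Lemma T_S p alpha l n r : T p alpha l n r =
  ((l`! * p ^ l)%:R / ((n %/ p ^ alpha.-1)`!)%:R) * S (p ^ alpha) l n r.
Proof. by rewrite /T /S /Fterm big_mkcond. Qed.

Theorem lemma2p2 (p alpha : nat) (hp : prime p) (ha : (0 < alpha)%N)
  (l n : nat) (hn : (0 < n)%N) (r : int) :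
  (T p alpha l n.-1 r - T p alpha l n.-1 (r - 1) =
     if ~~ (p ^ alpha.-1 %| n)%N then T p alpha l n r
     else (n%:R / (p ^ alpha.-1)%:R) * T p alpha l n r)
  /\
  ((0 < l)%N ->
   T p alpha l n r + (r%:~R / (p ^ alpha.-1)%:R) * T p alpha l.-1 n (r + (p ^ alpha)%:Z) =
     if (p ^ alpha.-1 %| n)%N then - T p alpha l.-1 n.-1 (r + (p ^ alpha)%:Z - 1)
     else - ((n%:R / (p ^ alpha.-1)%:R) * T p alpha l.-1 n.-1 (r + (p ^ alpha)%:Z - 1))).
Proof.
rewrite !T_S.
set Q := (p ^ alpha.-1)%N.
have hm : (p ^ alpha = p * Q)%N by rewrite /Q -expnS prednK.
rewrite hm.
have hp0 : (0 < p)%N by rewrite prime_gt0.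
have hQ0 : (0 < Q)%N by rewrite /Q expn_gt0 hp0.
case: n hn => [//|n] _ /=.
have hdiv := divnS n hQ0.
have pR : p%:R != 0 :> rat by rewrite pnatr_eq0 -lt0n.
have QR : Q%:R != 0 :> rat by rewrite pnatr_eq0 -lt0n.
have fR : ((n %/ Q)`!)%:R != 0 :> rat by rewrite pnatr_eq0 -lt0n fact_gt0.
have gR : ((n %/ Q).+1)%:R != 0 :> rat by rewrite pnatr_eq0.
have hq : (Q %| n.+1)%N -> n.+1%:R / Q%:R = ((n %/ Q).+1)%:R :> rat.
  move=> hd; rewrite -(divnK hd) natrM mulfK // hdiv hd.
  by rewrite add1n.
rewrite hdiv.
split.
  rewrite -mulrBr -S_pascal.
  case hd: (Q %| n.+1)%N => /=; last by rewrite add0n.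
  rewrite (hq hd) add1n factS natrM.
  set s := S _ _ _ _; set c := ((l`! * p ^ l)%:R : rat).
  move: (n %/ Q)%N fR gR => d fR gR.
  field; by rewrite fR /= addrC natr1 gR.
case: l => [//|l] _ /=.
have K := @S_key p Q l n r hp0 hQ0.
set s1 := S (p * Q) l.+1 n.+1 r in K *.
set s2 := S (p * Q) l n.+1 (r + (p * Q)%N) in K *.
set s3 := S (p * Q) l n (r + (p * Q)%N - 1) in K *.
have lR : (l.+1)%:R != 0 :> rat by rewrite pnatr_eq0.
have lpR : (l.+1 * p)%:R != 0 :> rat by rewrite natrM mulf_neq0.
have -> : s1 = (- (n.+1%:R / Q%:R) * s3 - (r%:~R / Q%:R) * s2) / (l.+1 * p)%:R.
  by rewrite -K addrK mulrC mulKf.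
have flR : (l`!)%:R != 0 :> rat by rewrite pnatr_eq0 -lt0n fact_gt0.
rewrite factS expnS !natrM.
case hd: (Q %| n.+1)%N => /=.
  rewrite (hq hd) add1n factS natrM.
  move: (n %/ Q)%N fR gR => d fR gR.
  field; by rewrite ?fR ?pR ?lR ?flR ?QR /= addrC natr1 gR addrC natr1 lR.
rewrite add0n; move: (n %/ Q)%N fR => d fR.
field; by rewrite ?fR ?pR ?flR ?QR /= addrC natr1 lR.
Qed.
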